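(* Let $A(z)=\sum_{k=0}^{\infty}a_kz^k$ with $a_0\neq 0$ and $H(z)=\sum_{k=1}^{\infty}h_kz^k$ with $h_1\neq 0$ be analytic in a disk $|z|<R$ with $R>1$, with real coefficients. Let the Sheffer polynomials $p_k$ be defined by $A(t)e^{xH(t)}=\sum_{k=0}^{\infty}p_k(x)t^k$ for $|t|<R$, and assume $p_k(x)\ge 0$ for all $x\ge 0$ and all $k$, $A(1)\neq 0$ and $H'(1)=1$. Let $(b_n)$ be a positive increasing sequence with $b_n\to\infty$ and $b_n/n\to 0$, and define $$T_n^*(f;x)=\frac{e^{-\frac{n}{b_n}xH(1)}}{A(1)}\sum_{k=0}^{\infty}p_k\Big(\frac{n}{b_n}x\Big)f\Big(\frac{k}{n}b_n\Big).$$ Let $\rho(x)=1+x^2$. Then there is a constant $M>0$, independent of $n$, such that $\|T_n^*(\rho;\cdot)\|_{\rho}\le 1+M$ for all $n$.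
   Context: For a function $g$ on $[0,\infty)$, $\|g\|_\rho=\sup_{x\ge 0}\frac{|g(x)|}{\rho(x)}$. *)

(* Defs.v *)
From Stdlib Require Import Reals.
From Coquelicot Require Import Coquelicot.
Open Scope R_scope.

Definition rho (x : R) : R := 1 + x ^ 2.

(* The operator T_n^*(f; x), with A(t) = PSeries a t, H(t) = PSeries h t,
   p the Sheffer polynomials and b the sequence (b_n). *)
Definition T_star (a h : nat -> R) (p : nat -> R -> R) (b : nat -> R)
  (n : nat) (f : R -> R) (x : R) : R :=
  exp (- (INR n / b n) * x * PSeries h 1) / PSeries a 1 *
  Series (fun k => p k (INR n / b n * x) * f (INR k / INR n * b n)).

(* Main.v *)
Require Import Defs.
From Stdlib Require Import Reals Lra Lia Arith.
From Coquelicot Require Import Coquelicot.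
Open Scope R_scope.


Lemma bounded_of_lim0 (u : nat -> R) :
  is_lim_seq u 0 -> exists M, forall n, Rabs (u n) <= M.
Proof.
  intros Hu. apply is_lim_seq_spec in Hu.
  destruct (Hu (mkposreal 1 Rlt_0_1)) as [N HN]. simpl in HN.
  assert (H : forall m, exists M, forall n, (n < m)%nat -> Rabs (u n) <= M).
  { induction m as [|m [M HM]].
    - exists 0; intros; lia.
    - exists (Rmax M (Rabs (u m))). intros n Hn.
      destruct (Nat.eq_dec n m) as [->|Hne]. apply Rmax_r.
      eapply Rle_trans; [apply HM; lia | apply Rmax_l]. }
  destruct (H N) as [M HM]. exists (Rmax M 1). intros n.
  destruct (le_lt_dec N n) as [l|l].
  - specialize (HN n l). rewrite Rminus_0_r in HN.
    eapply Rle_trans; [|apply Rmax_r]. lra.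
  - eapply Rle_trans; [apply HM; exact l|apply Rmax_l].
Qed.

Lemma radius_ge (P : nat -> R) (r : R) :
  ex_pseries P r -> Rbar_le r (CV_radius P).
Proof.
  intros Hex. destruct (CV_radius_bounded P) as [Hub _]. apply Hub.
  apply ex_series_lim_0 in Hex.
  destruct (bounded_of_lim0 _ Hex) as [M HM]. exists M. intros n.
  specialize (HM n). unfold scal in HM; simpl in HM. unfold mult in HM; simpl in HM.
  rewrite pow_n_pow in HM. rewrite Rmult_comm. exact HM.
Qed.

Lemma lt_of_le_rad (P : nat -> R) (r t : R) :
  Rbar_le r (CV_radius P) -> Rabs t < r -> Rbar_lt (Rabs t) (CV_radius P).
Proof.
  intros H1 H2. destruct (CV_radius P) as [c| |]; simpl in *; lra.
Qed.

Lemma loc_ball (r t : R) : Rabs t < r -> locally t (fun u => Rabs u < r).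
Proof.
  intros Ht. apply (locally_interval _ t (Finite (-r)) (Finite r)).
  - simpl. apply Rabs_def2 in Ht. lra.
  - simpl. apply Rabs_def2 in Ht. lra.
  - intros u H1 H2. simpl in *. apply Rabs_def1; lra.
Qed.

Lemma PS1 (Q : nat -> R) : PSeries Q 1 = Series Q.
Proof.
  unfold PSeries. apply Series_ext. intros k. rewrite pow1. ring.
Qed.

Lemma exPS1 (Q : nat -> R) : ex_pseries Q 1 -> ex_series Q.
Proof.
  apply ex_series_ext. intros k. rewrite pow_n_pow.
  unfold scal; simpl; unfold mult; simpl. rewrite pow1. ring.
Qed.

Lemma key (a h : nat -> R) (R0 : R) (p : nat -> R -> R)
  (HR0 : 1 < R0)
  (Ha_rad : Rbar_le (Finite R0) (CV_radius a))
  (Hh_rad : Rbar_le (Finite R0) (CV_radius h))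
  (Hgen : forall x t : R, Rabs t < R0 ->
     is_pseries (fun k => p k x) t (PSeries a t * exp (x * PSeries h t)))
  (y : R) :
  ex_series (fun k => p k y) /\ ex_series (fun k => INR k ^ 2 * p k y) /\
  Series (fun k => p k y) = PSeries a 1 * exp (y * PSeries h 1) /\
  Series (fun k => INR k ^ 2 * p k y) = exp (y * PSeries h 1) *
    (PSeries (PS_derive a) 1 + PSeries (PS_derive (PS_derive a)) 1
     + y * (PSeries a 1 * PSeries (PS_derive h) 1
            + 2 * PSeries (PS_derive a) 1 * PSeries (PS_derive h) 1
            + PSeries a 1 * PSeries (PS_derive (PS_derive h)) 1)
     + y ^ 2 * (PSeries a 1 * PSeries (PS_derive h) 1 ^ 2)).
Proof.
  set (P := fun k => p k y).
  set (r := (1 + R0) / 2).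
  assert (Hr1 : 1 < r) by (unfold r; lra).
  assert (HrR : r < R0) by (unfold r; lra).
  assert (HPr : Rbar_le r (CV_radius P)).
  { apply radius_ge. eexists. apply Hgen. rewrite Rabs_pos_eq; lra. }
  assert (Hrad : forall Q, Rbar_le R0 (CV_radius Q) -> forall t, Rabs t < R0 ->
            Rbar_lt (Rabs t) (CV_radius Q)).
  { intros Q HQ t Ht. exact (lt_of_le_rad Q R0 t HQ Ht). }
  assert (H1r : Rabs 1 < r) by (rewrite Rabs_R1; lra).
  assert (H1R : Rabs 1 < R0) by (rewrite Rabs_R1; lra).
  set (F1 := fun t => PSeries (PS_derive a) t * exp (y * PSeries h t)
              + PSeries a t * (y * PSeries (PS_derive h) t * exp (y * PSeries h t))).
  assert (C1 : forall t, Rabs t < r -> PSeries (PS_derive P) t = F1 t).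
  { intros t Ht.
    assert (HtR : Rabs t < R0) by lra.
    assert (HG : is_derive (PSeries P) t (PSeries (PS_derive P) t)).
    { apply is_derive_PSeries. exact (lt_of_le_rad P r t HPr Ht). }
    assert (HF : is_derive (fun u => PSeries a u * exp (y * PSeries h u)) t (F1 t)).
    { unfold F1. auto_derive.
      - split; [apply ex_derive_PSeries; apply Hrad; auto|].
        split; [apply ex_derive_PSeries; apply Hrad; auto|]. trivial.
      - rewrite !Derive_PSeries by (apply Hrad; auto). ring. }
    apply is_derive_ext_loc with (g := fun u => PSeries a u * exp (y * PSeries h u)) in HG.
    - apply is_derive_unique in HG. apply is_derive_unique in HF. rewrite <- HG. exact HF.
    - apply filter_imp with (P := fun u => Rabs u < r); [|apply loc_ball; exact Ht].
      intros u Hu. apply is_pseries_unique. apply Hgen. lra. }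
  set (E := exp (y * PSeries h 1)).
  set (F2 := PSeries (PS_derive (PS_derive a)) 1 * E
             + PSeries (PS_derive a) 1 * (y * PSeries (PS_derive h) 1 * E)
             + (PSeries (PS_derive a) 1 * (y * PSeries (PS_derive h) 1 * E)
                + PSeries a 1 * (y * PSeries (PS_derive (PS_derive h)) 1 * E
                   + y * PSeries (PS_derive h) 1 * (y * PSeries (PS_derive h) 1 * E)))).
  assert (Rda : forall t, Rabs t < R0 -> Rbar_lt (Rabs t) (CV_radius (PS_derive a))).
  { intros t Ht; rewrite CV_radius_derive; apply Hrad; auto. }
  assert (Rdh : forall t, Rabs t < R0 -> Rbar_lt (Rabs t) (CV_radius (PS_derive h))).
  { intros t Ht; rewrite CV_radius_derive; apply Hrad; auto. }
  assert (C2 : PSeries (PS_derive (PS_derive P)) 1 = F2).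
  { assert (HG : is_derive (PSeries (PS_derive P)) 1 (PSeries (PS_derive (PS_derive P)) 1)).
    { apply is_derive_PSeries. rewrite CV_radius_derive. exact (lt_of_le_rad P r 1 HPr H1r). }
    assert (HF : is_derive F1 1 F2).
    { unfold F1, F2, E. auto_derive.
      - repeat split; apply ex_derive_PSeries; auto.
      - rewrite !Derive_PSeries by auto. ring. }
    apply is_derive_ext_loc with (g := F1) in HG.
    - apply is_derive_unique in HG. apply is_derive_unique in HF. rewrite <- HG. exact HF.
    - apply filter_imp with (P := fun u => Rabs u < r); [|apply loc_ball; exact H1r].
      intros u Hu. apply C1. exact Hu. }
  set (Q1 := @PS_incr_1 R_AbsRing R_NormedModule (PS_derive P)).
  set (Q2 := @PS_incr_1 R_AbsRing R_NormedModule (PS_derive Q1)).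
  assert (HQ2 : forall k, Q2 k = INR k ^ 2 * P k).
  { intros [|k]; [simpl; unfold zero; simpl; ring|].
    unfold Q2, Q1; simpl. unfold PS_derive. simpl. ring. }
  assert (RQ1 : Rbar_lt (Rabs 1) (CV_radius (PS_derive Q1))).
  { unfold Q1. rewrite CV_radius_derive, CV_radius_incr_1, CV_radius_derive.
    exact (lt_of_le_rad P r 1 HPr H1r). }
  assert (S2 : PSeries Q2 1 = PSeries (PS_derive P) 1 + PSeries (PS_derive (PS_derive P)) 1).
  { unfold Q2. rewrite PSeries_incr_1, Rmult_1_l.
    rewrite <- Derive_PSeries.
    2:{ unfold Q1. rewrite CV_radius_incr_1, CV_radius_derive. exact (lt_of_le_rad P r 1 HPr H1r). }
    apply is_derive_unique.
    apply is_derive_ext with (f := fun t => t * PSeries (PS_derive P) t).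
    { intros t. unfold Q1. rewrite PSeries_incr_1. reflexivity. }
    auto_derive.
    - apply ex_derive_PSeries. rewrite CV_radius_derive. exact (lt_of_le_rad P r 1 HPr H1r).
    - rewrite Derive_PSeries. ring. rewrite CV_radius_derive. exact (lt_of_le_rad P r 1 HPr H1r). }
  split; [|split; [|split]].
  - apply exPS1. eexists. apply Hgen. exact H1R.
  - apply ex_series_ext with (a := Q2); [exact HQ2|].
    apply exPS1. apply CV_radius_inside.
    unfold Q2. rewrite CV_radius_incr_1. exact RQ1.
  - rewrite <- PS1. apply is_pseries_unique. apply Hgen. exact H1R.
  - rewrite <- (Series_ext Q2) by exact HQ2. rewrite <- PS1. rewrite S2, C2, (C1 1 H1r).
    unfold F1, F2, E. ring.
Qed.
Theorem lemma3p3
  (a h : nat -> R) (R0 : R) (p : nat -> R -> R) (b : nat -> R)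
  (HR0 : 1 < R0)
  (Ha_rad : Rbar_le (Finite R0) (CV_radius a))
  (Hh_rad : Rbar_le (Finite R0) (CV_radius h))
  (Ha0 : a 0%nat <> 0)
  (Hh0 : h 0%nat = 0)
  (Hh1 : h 1%nat <> 0)
  (Hgen : forall x t : R, Rabs t < R0 ->
     is_pseries (fun k => p k x) t (PSeries a t * exp (x * PSeries h t)))
  (Hpos : forall (k : nat) (x : R), 0 <= x -> 0 <= p k x)
  (HA1 : PSeries a 1 <> 0)
  (HH1 : is_derive (fun t => PSeries h t) 1 1)
  (Hb_pos : forall n : nat, 0 < b n)
  (Hb_incr : forall n : nat, b n < b (S n))
  (Hb_inf : is_lim_seq b p_infty)
  (Hb_n : is_lim_seq (fun n => b n / INR n) 0) :
  exists M : R, 0 < M /\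
    forall n : nat, (1 <= n)%nat ->
      forall x : R, 0 <= x ->
        ex_series (fun k => p k (INR n / b n * x) * rho (INR k / INR n * b n)) /\
        Rabs (T_star a h p b n rho x) / rho x <= 1 + M.
Proof.
  destruct (bounded_of_lim0 _ Hb_n) as [K HK].
  set (A0 := PSeries a 1). set (A1 := PSeries (PS_derive a) 1).
  set (A2 := PSeries (PS_derive (PS_derive a)) 1).
  set (H0 := PSeries h 1). set (H1 := PSeries (PS_derive h) 1).
  set (H2 := PSeries (PS_derive (PS_derive h)) 1).
  set (al := (A1 + A2) / A0). set (be := (A0 * H1 + 2 * A1 * H1 + A0 * H2) / A0).
  set (ga := H1 ^ 2).
  assert (HK0 : 0 <= K) by (specialize (HK 0%nat); pose proof (Rabs_pos (b 0%nat / INR 0)); lra).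
  exists (K ^ 2 * Rabs al + K * Rabs be + ga + 1).
  split.
  { pose proof (Rabs_pos al). pose proof (Rabs_pos be). unfold ga.
    assert (0 <= K ^ 2 * Rabs al) by (apply Rmult_le_pos; [apply pow2_ge_0|lra]).
    assert (0 <= K * Rabs be) by (apply Rmult_le_pos; lra).
    pose proof (pow2_ge_0 H1). lra. }
  intros n Hn x Hx.
  set (y := INR n / b n * x).
  set (c := b n / INR n).
  assert (Hnpos : 0 < INR n) by (apply lt_0_INR; lia).
  assert (Hbn := Hb_pos n).
  assert (Hc0 : 0 < c) by (unfold c; apply Rdiv_lt_0_compat; lra).
  assert (HcK : c <= K) by (specialize (HK n); fold c in HK; rewrite Rabs_pos_eq in HK by lra; lra).
  destruct (key a h R0 p HR0 Ha_rad Hh_rad Hgen y) as [Ex0 [Ex2 [S0 S2]]].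
  fold A0 A1 A2 H0 H1 H2 in S0, S2.
  assert (Hterm : forall k, p k y * rho (INR k / INR n * b n)
                  = p k y + c ^ 2 * (INR k ^ 2 * p k y)).
  { intros k. unfold rho. unfold c. field. lra. }
  assert (Hex : ex_series (fun k => p k (INR n / b n * x) * rho (INR k / INR n * b n))).
  { apply ex_series_ext with (a := fun k => p k y + c ^ 2 * (INR k ^ 2 * p k y)).
    { intros k; symmetry; apply Hterm. }
    exact (@ex_series_plus R_AbsRing R_NormedModule _ _ Ex0
             (@ex_series_scal_l R_AbsRing R_NormedModule (c ^ 2) _ Ex2)). }
  split; [exact Hex|].
  assert (HS : Series (fun k => p k y * rho (INR k / INR n * b n))
               = A0 * exp (y * H0) + c ^ 2 * (exp (y * H0) *
    (A1 + A2 + y * (A0 * H1 + 2 * A1 * H1 + A0 * H2) + y ^ 2 * (A0 * H1 ^ 2)))).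
  { change (INR n / b n * x) with y. rewrite (Series_ext _ _ Hterm). rewrite Series_plus; [|exact Ex0|exact (@ex_series_scal_l R_AbsRing R_NormedModule (c ^ 2) _ Ex2)].
    rewrite Series_scal_l. rewrite S0, S2. reflexivity. }
  assert (HE : 0 < exp (y * H0)) by apply exp_pos.
  assert (HT : T_star a h p b n rho x = 1 + c ^ 2 * al + c * x * be + x ^ 2 * ga).
  { unfold T_star. fold A0 H0 y. rewrite HS.
    replace (- (INR n / b n) * x * H0) with (- (y * H0)) by (unfold y; ring).
    rewrite exp_Ropp. unfold al, be, ga, c, y. field. repeat split; try lra; try exact HA1; try (apply Rgt_not_eq; apply exp_pos). }
  rewrite HT.
  pose proof (Rabs_pos al). pose proof (Rabs_pos be).
  assert (Hga : 0 <= ga) by (apply pow2_ge_0).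
  assert (Ha1 : Rabs (c ^ 2 * al) <= K ^ 2 * Rabs al * rho x).
  { rewrite Rabs_mult, Rabs_pos_eq by (apply pow2_ge_0). unfold rho.
    assert (c ^ 2 <= K ^ 2) by (apply pow_incr; lra).
    assert (c ^ 2 * Rabs al <= K ^ 2 * Rabs al) by (apply Rmult_le_compat_r; lra).
    assert (0 <= K ^ 2 * Rabs al) by (apply Rmult_le_pos; [apply pow2_ge_0|lra]).
    pose proof (pow2_ge_0 x).
    assert (K ^ 2 * Rabs al <= K ^ 2 * Rabs al * (1 + x ^ 2)).
    { rewrite <- (Rmult_1_r (K ^ 2 * Rabs al)) at 1. apply Rmult_le_compat_l; lra. }
    lra. }
  assert (Hb1 : Rabs (c * x * be) <= K * Rabs be * rho x).
  { rewrite !Rabs_mult, (Rabs_pos_eq c), (Rabs_pos_eq x) by lra. unfold rho.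
    assert (x <= 1 + x ^ 2) by nra.
    assert (c * x * Rabs be <= K * x * Rabs be).
    { apply Rmult_le_compat_r; [lra|]. apply Rmult_le_compat_r; lra. }
    assert (K * x * Rabs be <= K * (1 + x ^ 2) * Rabs be).
    { apply Rmult_le_compat_r; [lra|]. apply Rmult_le_compat_l; lra. }
    lra. }
  assert (Hc1 : Rabs (x ^ 2 * ga) <= ga * rho x).
  { rewrite Rabs_pos_eq by (apply Rmult_le_pos; [apply pow2_ge_0|lra]). unfold rho. nra. }
  assert (Hrho : 1 <= rho x) by (unfold rho; nra).
  assert (Hall : Rabs (1 + c ^ 2 * al + c * x * be + x ^ 2 * ga)
                 <= (1 + (K ^ 2 * Rabs al + K * Rabs be + ga + 1)) * rho x).
  { eapply Rle_trans. apply Rabs_triang. eapply Rle_trans. apply Rplus_le_compat_r. apply Rabs_triang.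
    eapply Rle_trans. apply Rplus_le_compat_r. apply Rplus_le_compat_r. apply Rabs_triang.
    rewrite Rabs_R1. nra. }
  unfold Rdiv. apply Rmult_le_reg_r with (rho x); [lra|].
  rewrite Rmult_assoc, Rinv_l, Rmult_1_r by lra. exact Hall.
Qed.
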